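(* Let $K$ be a field and let $A$ be a $K$-algebra finitely presented by $alg\langle X \mid P\rangle$, where $X$ is a set and $P \subseteq K[X^\dagger]$, with quotient morphism $\theta: K[X^\dagger] \to A$ (so $\theta$ induces an isomorphism $K[X^\dagger]/\langle P\rangle \cong A$, where $\langle P\rangle$ is the two-sided ideal generated by $P$). Let $Q \subseteq K[X^\dagger]$ and put $Q' := \theta(Q) \subseteq A$. Let $\langle Q'\rangle^r = \{q_1'a_1+\cdots+q_n'a_n : q_i'\in Q', a_i \in A\}$ be the right ideal of $A$ generated by $Q'$, and let $A/\langle Q'\rangle^r$ denote the set of classes of $A$ under the relation $a \sim b \iff a-b \in \langle Q'\rangle^r$. Define the mixed set $F := (F_T, F_P)$ with tagged part $F_T := \dashv\! Q = \{\dashv\! q : q \in Q\}$ and untagged part $F_P := P$. Then there is a bijection of sets $$\frac{K[\dashv\! X^\dagger]}{\stackrel{*}{\leftrightarrow}_F} \;\cong\; \frac{A}{\langle Q'\rangle^r}.$$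
   Context: $X^\dagger$ is the free semigroup of nonempty words on $X$, $X^*$ the free monoid (empty word $id$), and $K[X^\dagger]$ the free (noncommutative) $K$-algebra of polynomials $k_1m_1+\cdots+k_nm_n$ ($k_i\in K$, $m_i\in X^\dagger$). A semigroup well-ordering $>$ on $X^\dagger$ is fixed: a well-ordering such that $m_1>m_2$ implies $um_1v>um_2v$ for all $u,v\in X^*$. For a nonzero polynomial, its leading term $\mathtt{LT}$ is its largest term w.r.t. $>$ and its leading coefficient $\mathtt{LC}$ is the coefficient of that term. Tagged polynomials: $\dashv$ is a symbol; $\dashv\! X^\dagger=\{\dashv\! m : m\in X^\dagger\}$ is the set of tagged terms, and $K[\dashv\! X^\dagger]$ is the $K$-vector space with basis $\dashv\! X^\dagger$, a right $K[X^\dagger]$-module via $(\dashv\! m)w=\dashv\!(mw)$. For $p=\sum k_im_i\in K[X^\dagger]$ and $w\in X^*$, write $\dashv\! w\,p := \sum k_i \dashv\!(w m_i)$ (with $\dashv\! p := \dashv\! id\, p$). Tagged terms are ordered by $\dashv\! m_1>\dashv\! m_2 \iff m_1>m_2$, giving leading terms and coefficients of nonzero tagged polynomials. Reduction: for a mixed set $F=(F_T,F_P)$ with $F_T\subseteq K[\dashv\! X^\dagger]$, $F_P\subseteq K[X^\dagger]$ (zero elements ignored), the relation $\to_F$ on $K[\dashv\! X^\dagger]$ is: $f\to_F f-\frac{k}{\mathtt{LC}(f_i)} f_i v$ if $f_i\in F_T$, $v\in X^*$ and the tagged term $\mathtt{LT}(f_i)v$ occurs in $f$ with coefficient $k\neq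 0$; and $f\to_F f-\frac{k}{\mathtt{LC}(f_i)}\dashv\! w\, f_i\, v$ if $f_i\in F_P$, $w,v\in X^*$ and the tagged term $\dashv\!(w\,\mathtt{LT}(f_i)\,v)$ occurs in $f$ with coefficient $k\ne0$. (The paper normalizes all polynomials to be monic, i.e. $\mathtt{LC}=1$.) $\stackrel{*}{\leftrightarrow}_F$ denotes the reflexive, symmetric, transitive closure of $\to_F$. *)

(* Defs.v *)
From HB Require Import structures.
From mathcomp Require Import all_boot all_order all_algebra.
From mathcomp Require Import finmap.
From mathcomp.multinomials Require Import monalg.
From Stdlib Require Import Relation_Operators.

Set Implicit Arguments.
Unset Strict Implicit.
Unset Printing Implicit Defensive.

Import GRing.Theory.
Local Open Scope ring_scope.

(* Nonempty words X^dagger, encoded as (first letter, remaining letters). *)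
Definition word (X : finType) : Type := (X * seq X)%type.
HB.instance Definition _ (X : finType) := Choice.on (word X).

Definition wseq (X : finType) (m : word X) : seq X := m.1 :: m.2.

Definition wcat (X : finType) (w : seq X) (m : word X) (v : seq X) : word X :=
  match w with
  | [::] => (m.1, m.2 ++ v)
  | y :: w' => (y, w' ++ m.1 :: m.2 ++ v)
  end.

Notation fpoly K X := {malg K[word X]}.
(* K[-| X^dagger]: the K-vector space with basis the tagged terms -|m,
   the tagged term -|m being represented by the basis element <<m>>. *)
Notation tpoly K X := {malg K[word X]}.

Definition dtag (K : fieldType) (X : finType) (p : fpoly K X) : tpoly K X := p.

(* w p v := sum_i k_i (w m_i v); on tagged polynomials it is -| w p v *)
Definition shift (K : fieldType) (X : finType) (w : seq X) (p : fpoly K X)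
    (v : seq X) : fpoly K X :=
  \sum_(m <- msupp p) p@_m *: << wcat w m v >>.

Definition pmul (K : fieldType) (X : finType) (p q : fpoly K X) : fpoly K X :=
  \sum_(m <- msupp p) \sum_(n <- msupp q)
     (p@_m * q@_n) *: << wcat (wseq m) n [::] >>.

Definition semigroup_wellorder (X : finType) (lt : rel (word X)) : Prop :=
  [/\ irreflexive lt, transitive lt,
      (forall a b, a != b -> lt a b || lt b a),
      well_founded (fun a b => lt a b) &
      (forall (w v : seq X) (a b : word X),
          lt a b -> lt (wcat w a v) (wcat w b v))].

Definition is_LT (K : fieldType) (X : finType) (lt : rel (word X))
    (f : fpoly K X) (m : word X) : Prop :=
  m \in msupp f /\ (forall m', m' \in msupp f -> m' != m -> lt m' m).

Definition red (K : fieldType) (X : finType) (lt : rel (word X))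
    (FT : tpoly K X -> Prop) (FP : fpoly K X -> Prop) (f g : tpoly K X) : Prop :=
  (exists (fi : tpoly K X) (m : word X) (v : seq X),
      [/\ FT fi, is_LT lt fi m, f@_(wcat [::] m v) != 0 &
          g = f - (f@_(wcat [::] m v) / fi@_m) *: shift [::] fi v])
  \/
  (exists (p : fpoly K X) (m : word X) (w v : seq X),
      [/\ FP p, is_LT lt p m, f@_(wcat w m v) != 0 &
          g = f - (f@_(wcat w m v) / p@_m) *: shift w p v]).

Definition conv (K : fieldType) (X : finType) (lt : rel (word X))
    (FT : tpoly K X -> Prop) (FP : fpoly K X -> Prop) : tpoly K X -> tpoly K X -> Prop :=
  clos_refl_sym_trans _ (red lt FT FP).

Inductive ideal2 (K : fieldType) (X : finType) (S : fpoly K X -> Prop)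
    : fpoly K X -> Prop :=
  | ideal2_gen p : S p -> ideal2 S p
  | ideal2_0 : ideal2 S 0
  | ideal2_add p q : ideal2 S p -> ideal2 S q -> ideal2 S (p + q)
  | ideal2_scale k p : ideal2 S p -> ideal2 S (k *: p)
  | ideal2_lmul r p : ideal2 S p -> ideal2 S (pmul r p)
  | ideal2_rmul r p : ideal2 S p -> ideal2 S (pmul p r).

Definition nu_algebra (K : fieldType) (A : lmodType K) (mulA : A -> A -> A) : Prop :=
  [/\ associative mulA,
      (forall a, linear (mulA a)) &
      (forall a, linear (fun b => mulA b a))].

Inductive rideal (K : fieldType) (A : lmodType K) (mulA : A -> A -> A)
    (S : A -> Prop) : A -> Prop :=
  | rideal_gen a : S a -> rideal mulA S a
  | rideal_0 : rideal mulA S 0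
  | rideal_add a b : rideal mulA S a -> rideal mulA S b -> rideal mulA S (a + b)
  | rideal_scale k a : rideal mulA S a -> rideal mulA S (k *: a)
  | rideal_rmul a b : rideal mulA S a -> rideal mulA S (mulA a b).

Definition classes (T : Type) (R : T -> T -> Prop) : Type :=
  {C : T -> Prop | exists x, C = R x}.

(* Main.v *)
Require Import Defs.
From HB Require Import structures.
From mathcomp Require Import all_boot all_order all_algebra.
From mathcomp Require Import finmap.
From mathcomp.multinomials Require Import monalg.
From Stdlib Require Import Relation_Operators.
From Stdlib Require Import FunctionalExtensionality PropExtensionality ProofIrrelevance.
Set Implicit Arguments.
Unset Strict Implicit.
Unset Printing Implicit Defensive.
Import GRing.Theory.
Local Open Scope ring_scope.



Section Words.
Variable X : finType.
Lemma wseq_inj : injective (@wseq X).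
Proof. by case=> a s [b t] /= [-> ->]. Qed.
Lemma wseq_wcat (w : seq X) m v : wseq (wcat w m v) = w ++ wseq m ++ v.
Proof. by case: w => [|y w] //=; rewrite -catA. Qed.
Lemma wcat_inj (w v : seq X) : injective (fun m => wcat w m v).
Proof.
have catl : forall (u s t : seq X), u ++ s = u ++ t -> s = t.
  by elim=> [|y u IH] s t //= [] /IH.
have catr : forall (u s t : seq X), s ++ u = t ++ u -> s = t.
  move=> u s t /(congr1 rev); rewrite !rev_cat => /catl /(congr1 rev).
  by rewrite !revK.
move=> a b /(congr1 (@wseq X)); rewrite !wseq_wcat.
by move=> /catl /catr /wseq_inj.
Qed.
End Words.

Section Lext.
Variables (K : fieldType) (X : finType).
Lemma msuppU1' (m : word X) : msupp (<< m >> : fpoly K X) = [fset m]%fset.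
Proof. by rewrite msuppU oner_eq0. Qed.
Lemma mcoeffU1' (m m' : word X) : (<< m >> : fpoly K X)@_m' = (m == m')%:R.
Proof. by rewrite mcoeffU. Qed.

Implicit Types (w v : seq X) (p q r : fpoly K X).
Definition lext (f : word X -> word X) (p : fpoly K X) : fpoly K X :=
  \sum_(m <- msupp p) p@_m *: << f m >>.

Lemma lextEw f p (d : {fset word X}) : (msupp p `<=` d)%fset ->
  lext f p = \sum_(m <- d) p@_m *: << f m >>.
Proof.
move=> le; rewrite /lext (big_fset_incl _ le) // => x _ /mcoeff_outdom ->.
by rewrite scale0r.
Qed.

Lemma lextD f p q : lext f (p + q) = lext f p + lext f q.
Proof.
have le1 : (msupp p `<=` msupp p `|` msupp q)%fset by apply: fsubsetUl.
have le2 : (msupp q `<=` msupp p `|` msupp q)%fset by apply: fsubsetUr.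
rewrite (lextEw _ (msuppD_le p q)) (lextEw _ le1) (lextEw _ le2) -big_split /=.
by apply: eq_bigr => m _; rewrite mcoeffD scalerDl.
Qed.

Lemma lextZ f c p : lext f (c *: p) = c *: lext f p.
Proof.
rewrite (lextEw _ (msuppZ_le c p)) /lext scaler_sumr.
by apply: eq_bigr => m _; rewrite mcoeffZ scalerA.
Qed.

Lemma lext0 f : lext f 0 = 0.
Proof. by rewrite /lext msupp0 big_seq_fset0. Qed.

Lemma lextU f m : lext f << m >> = << f m >>.
Proof. by rewrite /lext msuppU1' big_seq_fset1 mcoeffUU scale1r. Qed.

Lemma lext_sum f (I : Type) (s : seq I) (F : I -> fpoly K X) :
  lext f (\sum_(i <- s) F i) = \sum_(i <- s) lext f (F i).
Proof.
elim: s => [|a s IH]; first by rewrite !big_nil lext0.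
by rewrite !big_cons lextD IH.
Qed.

Lemma eq_lext f g p : (forall m, f m = g m) -> lext f p = lext g p.
Proof. by move=> e; apply: eq_bigr => m _; rewrite e. Qed.

Lemma lext_comp f g p : lext f (lext g p) = lext (fun m => f (g m)) p.
Proof.
rewrite [lext g p]/lext lext_sum; apply: eq_bigr => m _.
by rewrite lextZ lextU.
Qed.

Lemma mcoeff_lext f p k :
  (lext f p)@_k = \sum_(m <- msupp p) p@_m * (f m == k)%:R.
Proof.
rewrite /lext raddf_sum; apply: eq_bigr => m _ /=.
by rewrite mcoeffZ mcoeffU1'.
Qed.

Lemma lext_id p : lext id p = p.
Proof.
apply/malgP => k; rewrite mcoeff_lext.
have [kin|kout] := boolP (k \in msupp p).
  rewrite (big_fsetD1 k) //= eqxx mulr1 big1_fset ?addr0 // => m.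
  by rewrite in_fsetD1 => /andP[/negbTE -> _] _; rewrite mulr0.
rewrite (mcoeff_outdom kout) big1_fset // => m min _.
by case: eqP => [e|_]; [move: kout; rewrite -e min | rewrite mulr0].
Qed.

Lemma mcoeff_lext_inj f p m : injective f -> (lext f p)@_(f m) = p@_m.
Proof.
move=> fi; transitivity ((lext id p)@_m); last by rewrite lext_id.
rewrite !mcoeff_lext.
by apply: eq_bigr => m' _; rewrite (inj_eq fi).
Qed.

Lemma shiftE w p v : shift w p v = lext (fun m => wcat w m v) p.
Proof. by []. Qed.

Lemma shift_nil p : shift [::] p [::] = p.
Proof.
rewrite shiftE -{2}(lext_id p); apply: eq_lext => -[a s] /=.
by rewrite cats0.
Qed.

Lemma pmulEl p q : pmul p q =
  \sum_(m <- msupp p) p@_m *: lext (fun n => wcat (wseq m) n [::]) q.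
Proof.
apply: eq_bigr => m _; rewrite /lext scaler_sumr.
by apply: eq_bigr => n _; rewrite scalerA.
Qed.

Lemma pmulEr p q : pmul p q =
  \sum_(n <- msupp q) q@_n *: lext (fun m => wcat [::] m (wseq n)) p.
Proof.
rewrite /pmul exchange_big /=; apply: eq_bigr => n _; rewrite /lext scaler_sumr.
apply: eq_bigr => m _; rewrite scalerA mulrC; congr (_ *: << _ >>).
by case: m => a s; case: n => b t /=; rewrite cats0.
Qed.

Lemma shift_pmull w r p v : shift w (pmul r p) v =
  \sum_(m <- msupp r) r@_m *: shift (w ++ wseq m) p v.
Proof.
rewrite pmulEl shiftE lext_sum; apply: eq_bigr => m _.
rewrite lextZ lext_comp shiftE; congr (_ *: _); apply: eq_lext => n.
by apply: (@wseq_inj X); rewrite !wseq_wcat /= cats0 -catA /= -catA.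
Qed.

Lemma shift_pmulr w p r v : shift w (pmul p r) v =
  \sum_(n <- msupp r) r@_n *: shift w p (wseq n ++ v).
Proof.
rewrite pmulEr shiftE lext_sum; apply: eq_bigr => n _.
rewrite lextZ lext_comp shiftE; congr (_ *: _); apply: eq_lext => m.
apply: (@wseq_inj X); rewrite !wseq_wcat /=.
by rewrite -catA.
Qed.

Lemma pmulU p n : pmul p << n >> = shift [::] p (wseq n).
Proof.
by rewrite -[LHS]shift_nil shift_pmulr msuppU1' big_seq_fset1 mcoeffUU scale1r cats0.
Qed.

Lemma Upmul n p v : shift [::] (pmul << n >> p) v = shift (wseq n) p v.
Proof. by rewrite shift_pmull msuppU1' big_seq_fset1 mcoeffUU scale1r. Qed.

Lemma mcoeff_shift w p v m : (shift w p v)@_(wcat w m v) = p@_m.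
Proof. by rewrite shiftE mcoeff_lext_inj //; apply: wcat_inj. Qed.
End Lext.



Lemma sig_ext (T : Type) (P : T -> Prop) (a b : {x | P x}) :
  proj1_sig a = proj1_sig b -> a = b.
Proof.
case: a => a Ha; case: b => b Hb /= e; subst b; f_equal; apply: proof_irrelevance.
Qed.

Lemma classes_bij (T U : Type) (RT : T -> T -> Prop) (RU : U -> U -> Prop)
  (th : T -> U) :
  (forall x, RU x x) -> (forall x y, RU x y -> RU y x) ->
  (forall x y z, RU x y -> RU y z -> RU x z) ->
  (forall x y, RT x y <-> RU (th x) (th y)) -> (forall u, exists x, th x = u) ->
  exists phi : classes RT -> classes RU, bijective phi.
Proof.
move=> Rr Rs Rt iff sur.
have phiP : forall C : classes RT,
    exists u, (fun u => exists x, proj1_sig C x /\ RU (th x) u) = RU u.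
  case=> C HC /=; have [x0 e] := HC; subst C; exists (th x0); apply: functional_extensionality => u.
  apply: propositional_extensionality; split.
    by case=> x [/iff H1 H2]; apply: Rt H1 H2.
  by move=> H; exists x0; split=> //; apply/iff.
have psiP : forall D : classes RU,
    exists x, (fun x => proj1_sig D (th x)) = RT x.
  case=> D HD /=; have [u0 e'] := HD; subst D; have [x0 e] := sur u0; subst u0; exists x0.
  apply: functional_extensionality => x.
  by apply: propositional_extensionality; split => /iff.
exists (fun C => exist (fun C' => exists u, C' = RU u) _ (phiP C)).
exists (fun D => exist (fun D' => exists x, D' = RT x) _ (psiP D)).
  case=> C HC; apply: sig_ext => /=; have [x0 e] := HC; subst C.
  apply: functional_extensionality => x; apply: propositional_extensionality.
  split.
    by case=> y [/iff H1 H2]; apply/iff; apply: Rt H1 H2.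
  by move=> H; exists x; split=> //; apply: Rr.
case=> D HD; apply: sig_ext => /=; have [u0 e] := HD; subst D.
apply: functional_extensionality => u; apply: propositional_extensionality.
split.
  by case=> x [H1 H2]; apply: Rt H1 H2.
by move=> H; have [x ex] := sur u; exists x; subst u; split=> //; apply: Rr.
Qed.

Section Lin.
Variables (K : fieldType) (U V : lmodType K) (f : U -> V).
Hypothesis fl : linear f.
Lemma lin0 : f 0 = 0.
Proof.
have := fl 1 0 0; rewrite scaler0 addr0 scale1r => e.
have : f 0 + f 0 - f 0 = f 0 - f 0 by rewrite -e.
by rewrite addrK subrr.
Qed.
Lemma linD x y : f (x + y) = f x + f y.
Proof. by have := fl 1 x y; rewrite !scale1r. Qed.
Lemma linZ k x : f (k *: x) = k *: f x.
Proof. by have := fl k x 0; rewrite !addr0 lin0 addr0. Qed.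
Lemma linB x y : f (x - y) = f x - f y.
Proof. by rewrite linD -scaleN1r linZ scaleN1r. Qed.
End Lin.

Lemma max_ex (T : eqType) (lt : rel T) : transitive lt ->
  (forall a b, a != b -> lt a b || lt b a) ->
  forall (s : seq T) x0, x0 \in s ->
  exists m, m \in s /\ (forall m', m' \in s -> m' != m -> lt m' m).
Proof.
move=> tr tot; elim=> [|a s IH] x0 //.
case: s IH => [|b s] IH _.
  by exists a; split; [rewrite inE | move=> m'; rewrite inE => ->].
have [m [ms mmax]] := IH b (mem_head _ _).
have [e|ne] := eqVneq a m.
  exists m; split; first by rewrite inE ms orbT.
  move=> m'; rewrite inE => /orP[/eqP->|]; first by rewrite e eqxx.
  exact: mmax.
have /orP[am|ma] := tot _ _ ne.
  exists m; split; first by rewrite inE ms orbT.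
  by move=> m'; rewrite inE => /orP[/eqP-> _|]; [exact: am | exact: mmax].
exists a; split; first by rewrite mem_head.
move=> m'; rewrite inE => /orP[/eqP->|m's]; first by rewrite eqxx.
have [->|m'm] := eqVneq m' m; first by [].
by move=> _; apply: tr (mmax _ m's m'm) ma.
Qed.



Section Main.
Variables (K : fieldType) (X : finType) (lt : rel (word X)).
Variables (FT : fpoly K X -> Prop) (FP : fpoly K X -> Prop).
Hypothesis hwo : semigroup_wellorder lt.

Lemma conv_refl x : conv lt FT FP x x.
Proof. exact: rst_refl. Qed.
Lemma conv_sym x y : conv lt FT FP x y -> conv lt FT FP y x.
Proof. exact: rst_sym. Qed.
Lemma conv_trans x y z : conv lt FT FP x y -> conv lt FT FP y z -> conv lt FT FP x z.
Proof. exact: rst_trans. Qed.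
Lemma conv_step x y : red lt FT FP x y -> conv lt FT FP x y.
Proof. exact: rst_step. Qed.

Definition Cv (h : fpoly K X) := forall g, conv lt FT FP (g + h) g.

Lemma Cv0 : Cv 0.
Proof. by move=> g; rewrite addr0; apply: conv_refl. Qed.

Lemma Cv_add h1 h2 : Cv h1 -> Cv h2 -> Cv (h1 + h2).
Proof.
move=> C1 C2 g; rewrite addrA; apply: conv_trans (C2 (g + h1)) (C1 g).
Qed.

Lemma Cv_sum (I : Type) (s : seq I) (F : I -> fpoly K X) :
  (forall i k, Cv (k *: F i)) -> forall k, Cv (k *: \sum_(i <- s) F i).
Proof.
move=> H k; elim: s => [|a s IH]; first by rewrite big_nil scaler0; apply: Cv0.
by rewrite big_cons scalerDr; apply: Cv_add.
Qed.

Lemma LT_ex (p : fpoly K X) : p != 0 -> exists m, is_LT lt p m.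
Proof.
case: hwo => _ tr tot _ _ pn0.
have : msupp p != fset0.
  apply: contra pn0 => /eqP e; apply/eqP/malgP => k.
  by rewrite mcoeff0; apply: mcoeff_outdom; rewrite e in_fset0.
case: (fset_0Vmem (msupp p)) => [->|[x xin] _]; first by rewrite eqxx.
have [m [ms mx]] := max_ex tr tot xin.
by exists m; split.
Qed.

Lemma core (s : fpoly K X) (k0 : word X) (c : K) : c != 0 -> s@_k0 = c ->
  (forall f, f@_k0 != 0 -> red lt FT FP f (f - (f@_k0 / c) *: s)) ->
  forall k, Cv (k *: s).
Proof.
move=> cn0 sc R k g.
have [->|kn0] := eqVneq k 0; first by rewrite scale0r addr0; apply: conv_refl.
set f := g + k *: s.
have fc : f@_k0 = g@_k0 + k * c by rewrite /f mcoeffD mcoeffZ sc.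
have [g0|gn0] := eqVneq (g@_k0) 0.
  have fn0 : f@_k0 != 0 by rewrite fc g0 add0r mulf_neq0.
  apply: conv_step; have := R f fn0; congr red.
  by rewrite fc g0 add0r mulfK // /f addrK.
have [f0|fn0] := eqVneq (f@_k0) 0.
  apply: conv_sym; apply: conv_step; have := R g gn0; congr red.
  have e : g@_k0 = - (k * c) by apply/eqP; rewrite -addr_eq0 -fc f0.
  by rewrite e mulNr mulfK // scaleNr opprK.
apply: conv_trans (conv_step (R f fn0)) _.
apply: conv_sym; apply: conv_step; have := R g gn0; congr red.
rewrite fc mulrDl mulfK // scalerDl /f opprD addrACA subrr addr0.
by [].
Qed.

Lemma CQ q v k : FT q -> Cv (k *: shift [::] q v).
Proof.
move=> hq; have [->|qn0] := eqVneq q 0.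
  by rewrite shiftE lext0 scaler0; apply: Cv0.
have [m [ms mx]] := LT_ex qn0.
apply: (@core _ (wcat [::] m v) (q@_m)).
- by rewrite mcoeff_neq0.
- exact: mcoeff_shift.
move=> f fn0; left; exists q, m, v; split=> //; exact: (conj ms mx).
Qed.

Lemma CP p w v k : FP p -> Cv (k *: shift w p v).
Proof.
move=> hp; have [->|pn0] := eqVneq p 0.
  by rewrite shiftE lext0 scaler0; apply: Cv0.
have [m [ms mx]] := LT_ex pn0.
apply: (@core _ (wcat w m v) (p@_m)).
- by rewrite mcoeff_neq0.
- exact: mcoeff_shift.
move=> f fn0; right; exists p, m, w, v; split=> //; exact: (conj ms mx).
Qed.

Lemma Cideal h : ideal2 FP h -> forall w v k, Cv (k *: shift w h v).
Proof.
elim=> {h} [p hp w v k|w v k|p q _ IH1 _ IH2 w v k|c p _ IH w v k|r p _ IH w v k|p r _ IH w v k].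
- exact: CP.
- by rewrite shiftE lext0 scaler0; apply: Cv0.
- have -> : shift w (p + q) v = shift w p v + shift w q v by rewrite !shiftE lextD.
  by rewrite scalerDr; apply: Cv_add; [apply: IH1 | apply: IH2].
- have -> : shift w (c *: p) v = c *: shift w p v by rewrite !shiftE lextZ.
  by rewrite scalerA; apply: IH.
- rewrite shift_pmull; apply: Cv_sum => m k'.
  by rewrite scalerA; apply: IH.
- rewrite shift_pmulr; apply: Cv_sum => n k'.
  by rewrite scalerA; apply: IH.
Qed.

Lemma Cker h k : ideal2 FP h -> Cv (k *: h).
Proof. by move=> hh; rewrite -(shift_nil h); apply: Cideal. Qed.

Lemma Cpmul q r k : FT q -> Cv (k *: pmul q r).
Proof.
move=> hq; rewrite -(shift_nil (pmul q r)) shift_pmulr; apply: Cv_sum => n k'.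
by rewrite scalerA cats0; apply: CQ.
Qed.
End Main.



Inductive T0 (K : fieldType) (X : finType) (Q : fpoly K X -> Prop) : fpoly K X -> Prop :=
  | T0q q : Q q -> T0 Q q
  | T0m q r : Q q -> T0 Q (pmul q r)
  | T00 : T0 Q 0
  | T0add p q : T0 Q p -> T0 Q q -> T0 Q (p + q)
  | T0scale k p : T0 Q p -> T0 Q (k *: p).

Lemma ideal_shift (K : fieldType) (X : finType) (S : fpoly K X -> Prop) h w v :
  ideal2 S h -> ideal2 S (shift w h v).
Proof.
have H0 : forall h' v', ideal2 S h' -> ideal2 S (shift [::] h' v').
  move=> h' [|y v'] hh; first by rewrite shift_nil.
  by rewrite -[y :: v']/(wseq (y, v')) -pmulU; apply: ideal2_rmul.
move=> hh; case: w => [|y w]; first exact: H0.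
rewrite -[y :: w]/(wseq (y, w)) -Upmul; apply: H0; exact: ideal2_lmul.
Qed.

Theorem main (K : fieldType) (X : finType) (lt : rel (word X))
    (P : seq (fpoly K X)) (Q : fpoly K X -> Prop)
    (A : lmodType K) (mulA : A -> A -> A) (theta : fpoly K X -> A) :
  semigroup_wellorder lt ->
  nu_algebra mulA ->
  linear theta ->
  (forall p q, theta (pmul p q) = mulA (theta p) (theta q)) ->
  (forall a : A, exists p, theta p = a) ->
  (forall p, theta p = 0 <-> ideal2 (fun r => r \in P) p) ->
  let Q' := fun a : A => exists q, Q q /\ theta q = a in
  let FT := fun f : tpoly K X => exists q, Q q /\ f = dtag q in
  let FP := fun p : fpoly K X => p \in P in
  exists phi : classes (conv lt FT FP) ->
               classes (fun a b : A => rideal mulA Q' (a - b)),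
    bijective phi.
Proof.
move=> hwo [massoc mlinl mlinr] hlin hmul hsurj hker Q' FT FP.
set RA := rideal mulA Q'.
have RAopp : forall a, RA a -> RA (- a).
  by move=> a ha; rewrite -scaleN1r; apply: rideal_scale.
apply: (@classes_bij _ _ _ _ theta).
- by move=> x; rewrite subrr; apply: rideal_0.
- by move=> x y /RAopp; rewrite opprB.
- by move=> x y z h1 h2; rewrite -(subrKA y); apply: rideal_add.
2: exact: hsurj.
move=> x y; split.
  elim=> {x y} [x y hred|x|x y _ IH|x y z _ IH1 _ IH2].
  - have sub : forall a b : A, a - (a - b) = b.
      by move=> a b; rewrite opprB addrC subrK.
    case: hred => [[fi [m [v [[q [hq efi]] _ _ ->]]]]|[p [m [w [v [hp _ _ ->]]]]]].
      rewrite (linB hlin) sub (linZ hlin); apply: rideal_scale.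
      rewrite efi /dtag; case: v => [|b v]; first by rewrite shift_nil; apply: rideal_gen; exists q.
      rewrite -[b :: v]/(wseq (b, v)) -pmulU hmul; apply: rideal_rmul.
      by apply: rideal_gen; exists q.
    rewrite (linB hlin) sub (linZ hlin).
    have -> : theta (shift w p v) = 0.
      by apply/hker; apply: ideal_shift; apply: ideal2_gen.
    by rewrite scaler0; apply: rideal_0.
  - by rewrite subrr; apply: rideal_0.
  - by move/RAopp: IH; rewrite opprB.
  - by rewrite -(subrKA (theta y)); apply: rideal_add.
move=> H.
have Trep : forall h, T0 Q h -> forall b, exists h', T0 Q h' /\ theta h' = mulA (theta h) b.
  move=> h; elim=> {h} [q hq|q r hq||p q _ IH1 _ IH2|k p _ IH] b.
  - have [r er] := hsurj b; exists (pmul q r); split; first exact: T0m.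
    by rewrite hmul er.
  - have [r1 e1] := hsurj (mulA (theta r) b); exists (pmul q r1); split.
      exact: T0m.
    by rewrite !hmul e1 massoc.
  - exists 0; split; first exact: T00.
    by rewrite (lin0 hlin); have := lin0 (mlinr b) => /= ->.
  - have [h1 [t1 e1]] := IH1 b; have [h2 [t2 e2]] := IH2 b.
    exists (h1 + h2); split; first exact: T0add.
    by rewrite !(linD hlin) e1 e2; have := linD (mlinr b) (theta p) (theta q) => /= ->.
  - have [h1 [t1 e1]] := IH b.
    exists (k *: h1); split; first exact: T0scale.
    by rewrite !(linZ hlin) e1; have := linZ (mlinr b) k (theta p) => /= ->.
have Rrep : forall a, RA a -> exists h, T0 Q h /\ theta h = a.
  move=> a; elim=> {a} [a [q [hq <-]]| |a1 a2 _ [h1 [t1 e1]] _ [h2 [t2 e2]]|k a _ [h [t e]]|a b _ [h [t e]]].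
  - by exists q; split; first exact: T0q.
  - by exists 0; split; [exact: T00 | exact: lin0 hlin].
  - by exists (h1 + h2); split; [exact: T0add | rewrite (linD hlin) e1 e2].
  - by exists (k *: h); split; [exact: T0scale | rewrite (linZ hlin) e].
  - have [h' [t' e']] := Trep h t b; exists h'; split=> //; by rewrite e' e.
have CT : forall h, T0 Q h -> forall k, Cv lt FT FP (k *: h).
  move=> h; elim=> {h} [q hq|q r hq||p q _ IH1 _ IH2|c p _ IH] k.
  - rewrite -(shift_nil q); apply: (CQ FP hwo); by exists q.
  - by apply: (Cpmul FP hwo); exists q.
  - by rewrite scaler0; apply: Cv0.
  - by rewrite scalerDr; apply: Cv_add.
  - by rewrite scalerA; apply: IH.
have [h0 [t0 e0]] := Rrep _ H.
have C1 : Cv lt FT FP h0 by rewrite -(scale1r h0); apply: CT.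
have C2 : Cv lt FT FP (x - y - h0).
  rewrite -(scale1r (x - y - h0)); apply: (Cker FT hwo); apply/hker.
  by rewrite !(linB hlin) e0 subrr.
have := Cv_add C1 C2 y.
have -> : y + (h0 + (x - y - h0)) = x by rewrite (addrC h0) subrK addrC subrK.
exact: id.
Qed.


Unset Implicit Arguments.
Theorem theorem3p4 (K : fieldType) (X : finType) (lt : rel (word X))
    (P : seq (fpoly K X)) (Q : fpoly K X -> Prop)
    (A : lmodType K) (mulA : A -> A -> A) (theta : fpoly K X -> A) :
  semigroup_wellorder lt ->
  nu_algebra mulA ->
  linear theta ->
  (forall p q, theta (pmul p q) = mulA (theta p) (theta q)) ->
  (forall a : A, exists p, theta p = a) ->
  (forall p, theta p = 0 <-> ideal2 (fun r => r \in P) p) ->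
  let Q' := fun a : A => exists q, Q q /\ theta q = a in
  let FT := fun f : tpoly K X => exists q, Q q /\ f = dtag q in
  let FP := fun p : fpoly K X => p \in P in
  exists phi : classes (conv lt FT FP) ->
               classes (fun a b : A => rideal mulA Q' (a - b)),
    bijective phi.
Proof. exact: main. Qed.
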